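(* Under the standing assumptions, no transaction DAG produced by the ABC protocol contains a pair of confirmed transactions that conflict.
   Context: ABC is a cryptocurrency protocol. An output is a pair (value, owner public key). A transaction $t$ has a set of inputs (outputs of earlier transactions, which $t$ spends), a set of outputs with the same total value, and a validator public key; it is signed by its inputs' secret keys. The genesis is an input-less transaction with output values summing to $M$, confirmed from the start. An ack is a validator-signed message containing a reference to the previous ack of the same validator and references to a set of transactions it signs. Messages reference only earlier messages and form a DAG rooted at genesis. $\mathrm{past}(x)$ is the set of messages reachable from $x$ by following references; $\mathrm{past}(A)=\bigcup_{x\in A}\mathrm{past}(x)$. The stake delegated to validator $v$ in $\mathrm{past}(A)$ (for a set of acks $A$) is the sum of the values of outputs, unspent in $\mathrm{past}(A)$, of transactions confirmed in $\mathrm{past}(A)$ that indicate $v$ as validator. A transaction $t$ is confirmed if the transactions producing its inputs are confirmed and there exists a set of acks $A_t$ such that the validators signing $t$ in $A_t$ have total delegated stake in $\mathrm{past}(A_t)$ strictly exceeding $\tfrac23 M$, and no other transaction in $\mathrm{past}(A_t)$ shares an input with $t$. Dependence: $t'$ depends on $t$ if $t'$ spends an output of $t$, closed reflexively and transitively. Conflict: two transactions spending the same output conflict; if $t_1,t_2$ conflict then every transaction depending on $t_1$ conflicts with every transaction depending on $t_2$. Standing assumptions: honest validators reference their own previous ack in every new ack and never sign two transactions sharing an input; honest agents never spend an output twice; the adversary behaves arbitrarily and controls message delivery (messages are eventually delivered, no timing bound); at all times the stake delegated to the adversary is less than $M/3$: genesis outputs delegated to adversarial validators sum to less than $M/3$,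 a transaction delegated to an honest validator decreases the adversary's count by the value of its adversary-delegated inputs when it is confirmed, and a transaction delegated to the adversary increases the count by the value of its honest-delegated inputs when it is issued. *)

(* Defs.v *)
From mathcomp Require Import all_boot.
Set Implicit Arguments. Unset Strict Implicit. Unset Printing Implicit Defensive.

Definition key := nat.

(* Messages, with references to other messages of type T.
   - Genesis outs : the input-less genesis transaction; each output is
       (value, owner key, validator key)  (genesis outputs are delegated
       individually, cf. "genesis outputs delegated to adversarial validators").
   - Tx ins outs v : a transaction spending the outputs [ins] (an output is
       referenced as (producing transaction, index)), creating outputs
       [outs] = (value, owner key), with validator key [v].
   - Ack v prev txs : an ack signed by validator [v], referencing its
       previous ack [prev] (None for the first one) and the transactions
       [txs] it signs. *)
Inductive msg (T : Type) : Type :=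
| Genesis of seq (nat * key * key)
| Tx of seq (T * nat) & seq (nat * key) & key
| Ack of key & option T & seq T.

Arguments Genesis {T}.
Arguments Tx {T}.
Arguments Ack {T}.

Section ABC.
Variable T : finType.
Variable m : T -> msg T.

Definition is_tx (x : T) : bool := if m x is Ack _ _ _ then false else true.
Definition is_ack (x : T) : bool := if m x is Ack _ _ _ then true else false.
Definition is_genesis (x : T) : bool := if m x is Genesis _ then true else false.
Definition is_ntx (x : T) : bool := if m x is Tx _ _ _ then true else false.

Definition ins (x : T) : seq (T * nat) := if m x is Tx i _ _ then i else [::].
Definition outs (x : T) : seq (nat * key * key) :=
  match m x with
  | Genesis o => o
  | Tx _ o v => [seq (p.1, p.2, v) | p <- o]
  | Ack _ _ _ => [::]
  end.
Definition txv (x : T) : key := if m x is Tx _ _ v then v else 0.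
Definition ackv (x : T) : key := if m x is Ack v _ _ then v else 0.
Definition ack_prev (x : T) : option T := if m x is Ack _ p _ then p else None.
Definition ack_txs (x : T) : seq T := if m x is Ack _ _ ts then ts else [::].

Definition outval (o : T * nat) : nat := (nth (0, 0, 0) (outs o.1) o.2).1.1.
Definition outowner (o : T * nat) : key := (nth (0, 0, 0) (outs o.1) o.2).1.2.
Definition outdeleg (o : T * nat) : key := (nth (0, 0, 0) (outs o.1) o.2).2.

Definition refs (x : T) : seq T :=
  match m x with
  | Genesis _ => [::]
  | Tx i _ _ => [seq o.1 | o <- i]
  | Ack _ p ts => (if p is Some q then [:: q] else [::]) ++ ts
  end.
Definition refrel : rel T := fun x y => y \in refs x.

Definition past (x : T) : {set T} := [set y | connect refrel x y].
Definition pastS (A : {set T}) : {set T} := \bigcup_(a in A) past a.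

Definition spent_in (D : {set T}) (o : T * nat) : bool := [exists u in D, o \in ins u].

(* Stake delegated to validator v in D, counting the unspent outputs of the
   transactions of D that belong to the set C (C = transactions confirmed in D). *)
Definition stake (C D : {set T}) (v : key) : nat :=
  \sum_(t in D | t \in C)
     \sum_(i < size (outs t) | (outdeleg (t, val i) == v) && ~~ spent_in D (t, val i))
        outval (t, val i).

Definition signers (A : {set T}) (t : T) : seq key :=
  undup [seq ackv a | a <- enum A & is_ack a && (t \in ack_txs a)].

Definition shares (t u : T) : bool := has (fun o => o \in ins u) (ins t).

Variable g : T.
Variable M : nat.    (* total money *)

(* The stake "delegated in past(A)" only counts transactions confirmed in
   past(A); since stake is monotone in the set of counted confirmed
   transactions, we quantify over a set C of transactions confirmed in
   past(A) (this keeps the inductive definition strictly positive and is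
   equivalent to taking C = all transactions confirmed in past(A)). *)
Inductive confirmed : {set T} -> T -> Prop :=
| confirmed_genesis (D : {set T}) : g \in D -> confirmed D g
| confirmed_tx (D : {set T}) (t : T) (A C : {set T}) :
    t \in D -> is_ntx t ->
    (forall o, o \in ins t -> confirmed D o.1) ->
    A \subset D -> (forall a, a \in A -> is_ack a) ->
    (forall c, c \in C -> confirmed (pastS A) c) ->
    2 * M < 3 * (\sum_(v <- signers A t) stake C (pastS A) v) ->
    (forall u, u \in pastS A -> u != t -> ~~ shares t u) ->
    confirmed D t.

Definition spends : rel T := fun u t => has (fun o => o.1 == t) (ins u).
Definition depends (u t : T) : bool := connect spends u t.

Inductive conflict : T -> T -> Prop :=
| conflict_base t1 t2 : is_tx t1 -> is_tx t2 -> t1 != t2 -> shares t1 t2 -> conflict t1 t2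
| conflict_dep t1 t2 u1 u2 :
    conflict t1 t2 -> depends u1 t1 -> depends u2 t2 -> conflict u1 u2.

Variable time : T -> nat.       (* creation (issuing) time of each message *)
Variable honest : pred key.

Definition prefix (k : nat) : {set T} := [set x | time x < k].

Definition well_formed : Prop :=
  injective time /\
  (forall x y, refrel x y -> time y < time x) /\
  (forall x, is_genesis x = (x == g)) /\
  (forall x, g \in past x) /\
  \sum_(o <- outs g) o.1.1 = M /\
  (forall x i o v, m x = Tx i o v ->
     uniq i /\
     (forall p, p \in i -> is_tx p.1 /\ p.2 < size (outs p.1)) /\
     \sum_(p <- i) outval p = \sum_(q <- o) q.1) /\
  (forall a v p ts, m a = Ack v p ts ->
     (forall t, t \in ts -> is_tx t) /\
     (forall q, p = Some q -> is_ack q /\ ackv q = v)).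

Definition honest_chain : Prop :=
  forall a v p ts, m a = Ack v p ts -> honest v ->
    match p with
    | None => forall b, is_ack b -> ackv b = v -> ~ time b < time a
    | Some q => is_ack q /\ ackv q = v /\ time q < time a /\
        forall b, is_ack b -> ackv b = v -> ~ (time q < time b /\ time b < time a)
    end.

Definition honest_signing : Prop :=
  forall a b t1 t2, is_ack a -> is_ack b -> ackv a = ackv b -> honest (ackv a) ->
    t1 \in ack_txs a -> t2 \in ack_txs b -> t1 != t2 -> ~~ shares t1 t2.

Definition honest_spending : Prop :=
  forall o t1 t2, honest (outowner o) -> o \in ins t1 -> o \in ins t2 -> t1 = t2.

Definition adv_genesis : nat := \sum_(o <- outs g | ~~ honest o.2) o.1.1.
Definition adv_inc (k : nat) : nat :=
  \sum_(t | (time t < k) && is_ntx t && ~~ honest (txv t))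
     \sum_(o <- ins t | honest (outdeleg o)) outval o.
Definition adv_dec (C : {set T}) : nat :=
  \sum_(t in C | is_ntx t && honest (txv t))
     \sum_(o <- ins t | ~~ honest (outdeleg o)) outval o.

(* at all times k the adversary's count
     adv_genesis + adv_inc k - adv_dec {t confirmed in the DAG at time k}
   is < M/3.  (As adv_dec is monotone, quantifying over a set C of
   transactions confirmed at time k is equivalent.) *)
Definition adversary_bound : Prop :=
  forall k, exists C : {set T},
    (forall t, t \in C -> confirmed (prefix k) t) /\
    3 * (adv_genesis + adv_inc k) < M + 3 * adv_dec C.

End ABC.

(* Main.v *)
Require Import Defs.
From mathcomp Require Import all_boot zify.
From Stdlib Require Import ClassicalEpsilon.
Set Implicit Arguments. Unset Strict Implicit. Unset Printing Implicit Defensive.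


Section Basics.
Variables (T : finType) (m : T -> msg T) (g : T) (M : nat) (time : T -> nat).
Variable WF : well_formed m g M time.

Lemma time_inj : injective time. Proof. by case: WF. Qed.
Lemma ref_time x y : y \in refs m x -> time y < time x.
Proof. by case: WF => _ [H _] /(H x y). Qed.
Lemma gen_iff x : is_genesis m x = (x == g). Proof. by case: WF => _ [_ [H _]]. Qed.
Lemma g_past x : g \in past m x. Proof. by case: WF => _ [_ [_ [H _]]]. Qed.

Lemma m_g : exists o, m g = Genesis o.
Proof. have := gen_iff g; rewrite eqxx /is_genesis; case: (m g) => // o _; by exists o. Qed.
Lemma ins_g : ins m g = [::].
Proof. by case: m_g => o; rewrite /ins => ->. Qed.

Lemma past_refl x : x \in past m x. Proof. by rewrite inE connect0. Qed.
Lemma refs_past x y : y \in refs m x -> y \in past m x.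
Proof. by move=> H; rewrite inE; apply: connect1. Qed.
Lemma past_trans x y z : y \in past m x -> z \in past m y -> z \in past m x.
Proof. rewrite !inE; exact: connect_trans. Qed.

Lemma past_time x y : y \in past m x -> time y <= time x.
Proof.
rewrite inE => /connectP [p Hp ->]; elim: p x Hp => [|a p IH] x //= /andP [Ha Hp].
apply: leq_trans (IH _ Hp) _; apply: ltnW; exact: ref_time.
Qed.
Lemma past_time_lt x y : y \in past m x -> y != x -> time y < time x.
Proof.
move=> H Hne; rewrite ltn_neqAle past_time // andbT.
by apply: contra Hne => /eqP /time_inj ->.
Qed.

Lemma pastSP (A : {set T}) y : reflect (exists2 a, a \in A & y \in past m a) (y \in pastS m A).
Proof. exact: bigcupP. Qed.
Lemma pastS_down (A : {set T}) y z : y \in pastS m A -> z \in past m y -> z \in pastS m A.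
Proof. move=> /pastSP [a Ha Hy] Hz; apply/pastSP; exists a => //; exact: past_trans Hy Hz. Qed.
Lemma past_sub_pastS (A : {set T}) a : a \in A -> past m a \subset pastS m A.
Proof. by move=> Ha; apply/subsetP => y Hy; apply/pastSP; exists a. Qed.
Lemma g_pastS (A : {set T}) a : a \in A -> g \in pastS m A.
Proof. by move=> Ha; apply/pastSP; exists a => //; apply: g_past. Qed.

Lemma ins_refs t o : o \in ins m t -> o.1 \in refs m t.
Proof. rewrite /ins /refs; case: (m t) => // i _ _ Ho; exact: map_f. Qed.
Lemma txs_refs a t : t \in ack_txs m a -> t \in refs m a.
Proof. rewrite /ack_txs /refs; case: (m a) => // v p ts Ht; by rewrite mem_cat Ht orbT. Qed.

Lemma ins_valid t p : p \in ins m t -> is_tx m p.1 /\ p.2 < size (outs m p.1).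
Proof.
rewrite /ins; case E: (m t) => [| i o v |] //.
case: WF => _ [_ [_ [_ [_ [H _]]]]]; by case: (H _ _ _ _ E) => _ [/(_ p) ].
Qed.
Lemma ins_uniq t : uniq (ins m t).
Proof.
rewrite /ins; case E: (m t) => [| i o v |] //.
case: WF => _ [_ [_ [_ [_ [H _]]]]]; by case: (H _ _ _ _ E).
Qed.
Lemma tx_sum t i o v : m t = Tx i o v -> \sum_(p <- i) outval m p = \sum_(q <- o) q.1.
Proof. move=> E; case: WF => _ [_ [_ [_ [_ [H _]]]]]; by case: (H _ _ _ _ E) => _ []. Qed.
Lemma genM : \sum_(o <- outs m g) o.1.1 = M.
Proof. by case: WF => _ [_ [_ [_ [H _]]]]. Qed.

End Basics.


Section Chain.
Variables (T : finType) (m : T -> msg T) (g : T) (M : nat) (time : T -> nat) (honest : pred key).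
Variable WF : well_formed m g M time.
Variable HC : honest_chain m time honest.

Lemma ack_form a : is_ack m a -> m a = Ack (ackv m a) (ack_prev m a) (ack_txs m a).
Proof. by rewrite /is_ack /ackv /ack_prev /ack_txs; case: (m a). Qed.

Lemma chain v a b : honest v -> is_ack m a -> is_ack m b -> ackv m a = v -> ackv m b = v ->
  time a < time b -> a \in past m b.
Proof.
move=> Hv Ha Hb Hav Hbv Hab.
move: {2}(time b).+1 (ltnSn (time b)) => n Hn.
elim: n b Hn Hb Hbv Hab => // n IH b Hn Hb Hbv Hab.
have := HC (ack_form Hb); rewrite Hbv => /(_ Hv).
case E: (ack_prev m b) => [q|].
- move=> [Hq [Hqv [Hqb Hbet]]].
  have Hqr : q \in refs m b by rewrite /refs (ack_form Hb) E mem_head.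
  case: (ltngtP (time a) (time q)) => Haq.
  + apply: past_trans (refs_past Hqr) _; apply: IH => //; exact: leq_trans Hqb _.
  + by case: (Hbet a Ha Hav).
  + by rewrite (time_inj WF Haq); apply: refs_past.
- by move=> H; case: (H a Ha Hav).
Qed.

End Chain.


Section Conf.
Variables (T : finType) (m : T -> msg T) (g : T) (M : nat).

Record certP (cf : {set T} -> T -> Prop) (D : {set T}) (t : T) (A C : {set T}) : Prop := CertP {
 cp_in : t \in D;
 cp_ntx : is_ntx m t;
 cp_ins : forall o, o \in ins m t -> cf D o.1;
 cp_AD : A \subset D;
 cp_ack : forall a, a \in A -> is_ack m a;
 cp_C : forall c, c \in C -> cf (pastS m A) c;
 cp_q : 2 * M < 3 * (\sum_(v <- signers m A t) stake m C (pastS m A) v);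
 cp_ns : forall u, u \in pastS m A -> u != t -> ~~ shares m t u }.

Fixpoint confN (n : nat) (D : {set T}) (t : T) : Prop :=
  match n with
  | 0 => False
  | n'.+1 => (t = g /\ g \in D) \/ exists A C, certP (confN n') D t A C
  end.

Lemma certP_mono (cf cf' : {set T} -> T -> Prop) D t A C :
  (forall D t, cf D t -> cf' D t) -> certP cf D t A C -> certP cf' D t A C.
Proof. move=> H [*]; constructor; auto. Qed.

Lemma confN_mono n n' D t : n <= n' -> confN n D t -> confN n' D t.
Proof.
elim: n n' D t => // n IH [|n'] D t //= Hn [H|[A [C Hc]]]; first by left.
right; exists A, C; apply: certP_mono Hc => D' t'; exact: IH.
Qed.

Lemma confN_in n D t : confN n D t -> t \in D.
Proof. case: n => //= n [[-> //]|[A [C Hc]]]; exact: cp_in Hc. Qed.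

Lemma bound_seq (X : eqType) (P : nat -> X -> Prop) (s : seq X) :
  (forall n n' x, n <= n' -> P n x -> P n' x) ->
  (forall x, x \in s -> exists n, P n x) -> exists N, forall x, x \in s -> P N x.
Proof.
move=> Hm; elim: s => [|x s IH] H; first by exists 0.
case: (H x (mem_head _ _)) => n Hn.
case: IH => [y Hy|N HN]; first by apply: H; rewrite inE Hy orbT.
exists (maxn n N) => y; rewrite inE => /orP [/eqP ->|Hy].
- apply: Hm Hn; exact: leq_maxl.
- apply: Hm (HN _ Hy); exact: leq_maxr.
Qed.

Lemma conf_confN D t : confirmed m g M D t -> exists n, confN n D t.
Proof.
elim => [D0 Hg|D0 t0 A C Ht Hn Hins IHins HA Hack HC IHC Hq Hns].
- by exists 1; left.
- have [N1 HN1] : exists N, forall o, o \in ins m t0 -> confN N D0 o.1.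
    apply: (bound_seq (P := fun n o => confN n D0 o.1)) => [n n' x|x Hx]; first exact: confN_mono.
    exact: IHins.
  have [N2 HN2] : exists N, forall c, c \in enum C -> confN N (pastS m A) c.
    apply: bound_seq => [n n' x|x Hx]; first exact: confN_mono.
    by apply: IHC; rewrite -mem_enum.
  exists (maxn N1 N2).+1; right; exists A, C; constructor => //.
  + move=> o Ho; apply: confN_mono (HN1 _ Ho); exact: leq_maxl.
  + move=> c Hc; apply: confN_mono (HN2 c _); [exact: leq_maxr | by rewrite mem_enum].
Qed.

Lemma conf_in D t : confirmed m g M D t -> t \in D.
Proof. by case. Qed.

Lemma conf_inputs (time : T -> nat) (WF : well_formed m g M time) D t o :
  confirmed m g M D t -> o \in ins m t -> confirmed m g M D o.1.
Proof.
case => [D0 Hg|D0 t0 A C Ht Hn Hins *]; last exact: Hins.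
by rewrite (ins_g WF).
Qed.

End Conf.


Section Flow.
Variables (T : finType) (m : T -> msg T) (g : T) (M : nat) (time : T -> nat).
Variable WF : well_formed m g M time.

Lemma sum_index (s : seq (T * nat)) (F : T * nat -> nat) :
  (forall p, p \in s -> p.2 < size (outs m p.1)) ->
  \sum_(p <- s) F p = \sum_t \sum_(i < size (outs m t)) count_mem (t, val i) s * F (t, val i).
Proof.
elim: s => [|x s IH] Hs.
  by rewrite big_nil; symmetry; apply: big1 => t _; apply: big1 => i _.
rewrite big_cons IH; last by move=> p Hp; apply: Hs; rewrite inE Hp orbT.
have Hx : x.2 < size (outs m x.1) by apply: Hs; rewrite mem_head.
rewrite [RHS](eq_bigr (fun t => \sum_(i < size (outs m t)) ((x == (t, val i)) * F (t, val i)
   + count_mem (t, val i) s * F (t, val i)))); last first.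
  by move=> t _; apply: eq_bigr => i _; rewrite /= mulnDl.
rewrite [RHS](eq_bigr _ (fun t _ => big_split _ _ _ _ _)) big_split /=; congr (_ + _).
rewrite (bigD1 x.1) //= [X in _ = _ + X]big1 ?addn0; last first.
  move=> t Htx; apply: big1 => i _.
  case: eqP => [E|]; last by rewrite mul0n.
  by move: Htx; rewrite E /= eqxx.
rewrite (bigD1 (Ordinal Hx)) //= [X in _ = _ + X]big1 ?addn0; last first.
  move=> i Hi; case: eqP => [E|]; last by rewrite mul0n.
  have E2 : x.2 = val i := f_equal snd E.
  by move: Hi; rewrite -val_eqE /= E2 eqxx.
by rewrite /= -surjective_pairing eqxx mul1n.
Qed.

Definition closedS (L : {set T}) := forall y p, y \in L -> p \in ins m y -> p.1 \in L.
Definition cfree (L : {set T}) := forall y y' p, y \in L -> y' \in L -> p \in ins m y -> p \in ins m y' -> y = y'.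

Definition totP (P : pred key) t := \sum_(i < size (outs m t) | P (outdeleg m (t, val i))) outval m (t, val i).
Definition invP (P : pred key) t := \sum_(p <- ins m t | P (outdeleg m p)) outval m p.
Definition unsp (P : pred key) (D : {set T}) t :=
  \sum_(i < size (outs m t) | P (outdeleg m (t, val i)) && ~~ spent_in m D (t, val i)) outval m (t, val i).

Lemma flow (P : pred key) (L : {set T}) : closedS L -> cfree L ->
  \sum_(t in L) totP P t = \sum_(t in L) unsp P L t + \sum_(t in L) invP P t.
Proof.
move=> Hcl Hcf.
rewrite /totP /unsp.
rewrite (eq_bigr (fun t => \sum_(i < size (outs m t) | P (outdeleg m (t, val i)) && ~~ spent_in m L (t, val i)) outval m (t, val i) + \sum_(i < size (outs m t) | P (outdeleg m (t, val i)) && spent_in m L (t, val i)) outval m (t, val i))); last first.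
  by move=> t _; rewrite (bigID (fun i : 'I__ => spent_in m L (t, val i))) addnC.
rewrite big_split /=; congr (_ + _).
rewrite /invP.
rewrite [RHS](eq_bigr (fun y => \sum_t \sum_(i < size (outs m t)) count_mem (t, val i) (ins m y) * (if P (outdeleg m (t, val i)) then outval m (t, val i) else 0))); last first.
  move=> y Hy; rewrite big_mkcond /=; apply: sum_index => p Hp; exact: (proj2 (ins_valid WF Hp)).
rewrite [RHS]exchange_big /=.
rewrite [RHS](bigID (fun t => t \in L)) /=.
rewrite [X in _ = _ + X]big1 ?addn0; last first.
  move=> t Ht; apply: big1 => y Hy; apply: big1 => i _.
  case Hc: (count_mem _ _) => [|k]; first by [].
  have : (t, val i) \in ins m y by rewrite -has_pred1 has_count Hc.
  by move=> Hin; have := Hcl _ _ Hy Hin; rewrite /= (negbTE Ht).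
apply: eq_big => [t|t Ht] //.
rewrite exchange_big /= big_mkcond /=; apply: eq_bigr => i _.
case HP: (P _) => /=; last by rewrite big1 // => y _; rewrite muln0.
rewrite -big_distrl /=.
case Hsp: (spent_in m L (t, val i)) => /=.
- move: Hsp => /existsP [y /andP [Hy Hin]].
  rewrite (bigD1 y) //= count_uniq_mem ?(ins_uniq WF) // Hin big1 ?addn0 ?mul1n //.
  move=> y' /andP [Hy' Hne]; rewrite count_uniq_mem ?(ins_uniq WF) //.
  case Hin': (_ \in _) => //; by move: Hne; rewrite (Hcf _ _ _ Hy' Hy Hin' Hin) eqxx.
- rewrite big1 ?mul0n // => y Hy; rewrite count_uniq_mem ?(ins_uniq WF) //.
  case Hin: (_ \in _) => //; move: Hsp => /negbT /existsP; case; exists y; by rewrite Hy Hin.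
Qed.

End Flow.

Section Tot.
Variables (T : finType) (m : T -> msg T) (g : T) (M : nat) (time : T -> nat).
Variable WF : well_formed m g M time.

Lemma tot_seq (P : pred key) t : totP m P t = \sum_(o <- outs m t | P o.2) o.1.1.
Proof.
rewrite /totP (big_nth (0,0,0)) big_mkord; apply: eq_bigr => i _ //.
Qed.

Lemma tot_other (P : pred key) t : t != g ->
  totP m P t = (if P (txv m t) then invP m predT t else 0).
Proof.
move=> Htg; rewrite tot_seq /invP /txv /ins.
have Hng : ~~ is_genesis m t by rewrite (gen_iff WF).
move: Hng; rewrite /is_genesis /outs.
case E: (m t) => [o| i o v | v p ts] //= _.
- rewrite big_map /= (tx_sum WF E).
  case: (P v); last by rewrite big_pred0.
  by [].
- by rewrite big_nil; case: (P 0); rewrite ?big_nil.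
Qed.

Lemma invP_split (P : pred key) t : invP m predT t = invP m P t + invP m (predC P) t.
Proof. by rewrite /invP (bigID (fun p => P (outdeleg m p))) /=. Qed.

End Tot.


Section Sig.
Variables (T : finType) (m : T -> msg T).

Lemma signersP (A : {set T}) t v :
  reflect (exists a, [/\ a \in A, is_ack m a, t \in ack_txs m a & ackv m a = v]) (v \in signers m A t).
Proof.
rewrite /signers mem_undup; apply: (iffP mapP).
- move=> [a]; rewrite mem_filter mem_enum => /andP [/andP [H1 H2] H3] ->; by exists a.
- move=> [a [H1 H2 H3 <-]]; exists a => //; by rewrite mem_filter mem_enum H1 H2 H3.
Qed.

Lemma sum_uniq_eq (s : seq key) (a : key) (c : nat) : uniq s ->
  \sum_(v <- s) (if a == v then c else 0) = (if a \in s then c else 0).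
Proof.
elim: s => [|x s IH] /=; first by rewrite big_nil.
move=> /andP [Hx Hs]; rewrite big_cons IH // inE.
case: (eqVneq a x) => [->|Hne] /=; last by [].
by rewrite (negbTE Hx) addn0.
Qed.

Lemma sig_sum (A C D : {set T}) t :
  \sum_(v <- signers m A t) stake m C D v =
  \sum_(x in D | x \in C) \sum_(i < size (outs m x) | (outdeleg m (x, val i) \in signers m A t) && ~~ spent_in m D (x, val i)) outval m (x, val i).
Proof.
rewrite /stake exchange_big /=; apply: eq_bigr => x _.
rewrite (eq_bigr (fun v => \sum_(i < size (outs m x)) (if outdeleg m (x, val i) == v then (if ~~ spent_in m D (x, val i) then outval m (x, val i) else 0) else 0))); last first.
  by move=> v _; rewrite big_mkcond; apply: eq_bigr => i _; case: (_ == v); case: (~~ _).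
rewrite exchange_big /= [RHS]big_mkcond /=; apply: eq_bigr => i _.
rewrite sum_uniq_eq ?undup_uniq //.
by case: (_ \in _); case: (~~ _).
Qed.

Lemma sig_nonempty (M : nat) (A C D : {set T}) t :
  2 * M < 3 * (\sum_(v <- signers m A t) stake m C D v) -> exists v, v \in signers m A t.
Proof.
case E: (signers m A t) => [|v s]; first by rewrite big_nil muln0.
by exists v; rewrite mem_head.
Qed.

End Sig.


Definition ltE (a b : nat * nat) : Prop := a.1 < b.1 \/ (a.1 = b.1 /\ a.2 < b.2).
Definition leEb (a b : nat * nat) : bool := (a.1 < b.1) || ((a.1 == b.1) && (a.2 <= b.2)).
Definition maxE a b := if leEb a b then b else a.
Definition minE a b := if leEb a b then a else b.
Definition keyE a b := (maxE a b, minE a b).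
Definition ltK (k k' : (nat * nat) * (nat * nat)) : Prop :=
  ltE k.1 k'.1 \/ (k.1 = k'.1 /\ ltE k.2 k'.2).

Lemma wf_lex (A B : Type) (RA : A -> A -> Prop) (RB : B -> B -> Prop) :
  well_founded RA -> well_founded RB ->
  well_founded (fun p q : A * B => RA p.1 q.1 \/ (p.1 = q.1 /\ RB p.2 q.2)).
Proof.
move=> wa wb [a b]; move: b; elim: (wa a) => {}a _ IHa b.
elim: (wb b) => {}b _ IHb; constructor => [[a' b']] /= [H|[H1 H2]].
- exact: IHa.
- subst a'; exact: IHb.
Qed.

Lemma wf_nat_lt : well_founded (fun a b : nat => a < b).
Proof.
move=> n; have : forall k, k <= n -> Acc (fun a b : nat => a < b) k; last by apply.
elim: n => [|n IH] k Hk; constructor => j Hj; first by lia.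
apply: IH; lia.
Qed.

Lemma wf_ltE : well_founded ltE.
Proof. exact: (wf_lex wf_nat_lt wf_nat_lt). Qed.
Lemma wf_ltK : well_founded ltK.
Proof. exact: (wf_lex wf_ltE wf_ltE). Qed.

Ltac desE := rewrite /ltK /keyE /maxE /minE /leEb /ltE /=.

Lemma K1 x y e1 e2 : ltE x e2 -> ltE y e2 -> ltK (keyE x y) (keyE e1 e2).
Proof.
case: x => [x1 x2]; case: y => [y1 y2]; case: e1 => [a1 a2]; case: e2 => [b1 b2].
desE => /= Hx Hy.
repeat match goal with |- context [if ?c then _ else _] => case: c / boolP end => /= *; first [lia | (right; split; [f_equal; lia | lia]) | idtac].
Qed.



Lemma K1' x y e1 e2 : ltE x e1 -> ltE y e1 -> ltK (keyE x y) (keyE e1 e2).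
Proof.
case: x => [x1 x2]; case: y => [y1 y2]; case: e1 => [a1 a2]; case: e2 => [b1 b2].
desE => /= Hx Hy.
repeat match goal with |- context [if ?c then _ else _] => case: c / boolP end => /= *; first [lia | (right; split; [f_equal; lia | lia]) | idtac].
Qed.

Ltac fin := first [lia | (left; lia) | (right; split; [first [reflexivity | f_equal; lia] | lia])].

Lemma K2 z e1 e2 : ltE z e2 -> ltK (keyE e1 z) (keyE e1 e2).
Proof.
case: z => [x1 x2]; case: e1 => [a1 a2]; case: e2 => [b1 b2].
case: (boolP ((a1 == b1) && (a2 == b2))) => [/andP [/eqP E1 /eqP E2]|Hne].
  subst; desE => /= Hx.
  repeat match goal with |- context [if ?c then _ else _] => case: c / boolP end => /= *; fin.
desE => /= Hx.
repeat match goal with |- context [if ?c then _ else _] => case: c / boolP end => /= *; fin.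
Qed.

Lemma K2' z e1 e2 : ltE z e1 -> ltK (keyE z e2) (keyE e1 e2).
Proof.
case: z => [x1 x2]; case: e1 => [a1 a2]; case: e2 => [b1 b2].
case: (boolP ((a1 == b1) && (a2 == b2))) => [/andP [/eqP E1 /eqP E2]|Hne].
  subst; desE => /= Hx.
  repeat match goal with |- context [if ?c then _ else _] => case: c / boolP end => /= *; fin.
desE => /= Hx.
repeat match goal with |- context [if ?c then _ else _] => case: c / boolP end => /= *; fin.
Qed.

Lemma K3 x y e1 e2 : ltE x e1 -> ltE y e2 -> ltK (keyE x y) (keyE e1 e2).
Proof.
case: x => [x1 x2]; case: y => [y1 y2]; case: e1 => [a1 a2]; case: e2 => [b1 b2].
case: (boolP ((a1 == b1) && (a2 == b2))) => [/andP [/eqP E1 /eqP E2]|Hne].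
  subst; desE => /= Hx Hy.
  repeat match goal with |- context [if ?c then _ else _] => case: c / boolP end => /= *; fin.
desE => /= Hx Hy.
repeat match goal with |- context [if ?c then _ else _] => case: c / boolP end => /= *; fin.
Qed.

Lemma keyE_sym x y : keyE x y = keyE y x \/ (x = y).
Proof.
case: x => [x1 x2]; case: y => [y1 y2].
case: (boolP ((x1 == y1) && (x2 == y2))) => [/andP [/eqP E1 /eqP E2]|Hne]; first by right; subst.
left; rewrite /keyE /maxE /minE /leEb /=.
repeat match goal with |- context [if ?c then _ else _] => case: c / boolP end => /= *; try (f_equal; f_equal; lia).
all: exfalso; lia.
Qed.

Lemma K4 x y e1 e2 : (ltE x e1 \/ ltE x e2) -> (ltE y e1 \/ ltE y e2) -> ltK (keyE x y) (keyE e1 e2).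
Proof.
move=> [Hx|Hx] [Hy|Hy]; first exact: K1'; first exact: K3; last exact: K1.
case: (keyE_sym x y) => [->|E]; first exact: K3.
subst y; exact: K3.
Qed.


Lemma sub_sum (I : finType) (P Q : pred I) (f f' : I -> nat) :
  (forall x, P x -> Q x) -> (forall x, P x -> f x <= f' x) ->
  \sum_(x | P x) f x <= \sum_(x | Q x) f' x.
Proof.
move=> HPQ Hf; rewrite big_mkcond [leqRHS]big_mkcond /=; apply: leq_sum => x _.
case HP: (P x); last by [].
by rewrite (HPQ _ HP) Hf.
Qed.

Lemma sum2_le (I : finType) (P1 P2 P : pred I) (f : I -> nat) :
  (forall x, P1 x -> P x) -> (forall x, P2 x -> P x) -> (forall x, P1 x -> P2 x -> False) ->
  \sum_(x | P1 x) f x + \sum_(x | P2 x) f x <= \sum_(x | P x) f x.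
Proof.
move=> H1 H2 H12; rewrite big_mkcond [X in _ + X]big_mkcond [leqRHS]big_mkcond -big_split /=.
apply: leq_sum => x _.
case E1: (P1 x); case E2: (P2 x) => //=.
- by case: (H12 x E1 E2).
- by rewrite (H1 _ E1) addn0.
- by rewrite (H2 _ E2).
Qed.

Section Parts.
Variables (T : finType) (m : T -> msg T) (g : T) (M : nat) (time : T -> nat) (honest : pred key).
Variable WF : well_formed m g M time.

Lemma totP_T x : totP m predT x = (if x == g then M else 0) + invP m predT x.
Proof.
case: (eqVneq x g) => [->|Hne].
- by rewrite tot_seq /= (genM WF) /invP (ins_g WF) big_nil addn0.
- by rewrite (tot_other WF) //.
Qed.

Lemma sum_g (L : {set T}) (c : nat) : \sum_(x in L) (if x == g then c else 0) <= c.
Proof.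
apply: (@leq_trans (\sum_(x : T) (if x == g then c else 0))).
  by apply: sub_sum => // x _; case: (x == g).
by rewrite -big_mkcond big_pred1_eq.
Qed.

Lemma unsp_le_M (L : {set T}) : closedS m L -> cfree m L -> \sum_(x in L) unsp m predT L x <= M.
Proof.
move=> Hcl Hcf.
have Hf := flow WF predT Hcl Hcf.
have : \sum_(x in L) totP m predT x <= M + \sum_(x in L) invP m predT x.
  rewrite (eq_bigr _ (fun x _ => totP_T x)) big_split /= leq_add2r; exact: sum_g.
rewrite Hf; lia.
Qed.

Lemma part1 (A1 C1 A2 C2 L : {set T}) t1 t2 :
  closedS m L -> cfree m L -> C1 \subset L -> C2 \subset L ->
  L \subset pastS m A1 -> L \subset pastS m A2 ->
  (forall v, honest v -> v \in signers m A1 t1 -> v \in signers m A2 t2 -> False) ->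
  \sum_(v <- signers m A1 t1) stake m C1 (pastS m A1) v +
  \sum_(x in pastS m A2 | x \in C2) \sum_(i < size (outs m x) | (outdeleg m (x, val i) \in signers m A2 t2) && honest (outdeleg m (x, val i)) && ~~ spent_in m (pastS m A2) (x, val i)) outval m (x, val i) <= M.
Proof.
move=> Hcl Hcf HC1 HC2 HL1 HL2 Hdisj.
have Hsp : forall (V : {set T}) o, L \subset V -> spent_in m L o -> spent_in m V o.
  move=> V o HLV /existsP [u /andP [Hu Ho]]; apply/existsP; exists u; by rewrite (subsetP HLV _ Hu) Ho.
rewrite sig_sum.
apply: leq_trans (unsp_le_M Hcl Hcf).
set f1 := fun x => \sum_(i < size (outs m x) | (outdeleg m (x, val i) \in signers m A1 t1) && ~~ spent_in m L (x, val i)) outval m (x, val i).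
set f2 := fun x => \sum_(i < size (outs m x) | (outdeleg m (x, val i) \in signers m A2 t2) && honest (outdeleg m (x, val i)) && ~~ spent_in m L (x, val i)) outval m (x, val i).
apply: (@leq_trans (\sum_(x in L) f1 x + \sum_(x in L) f2 x)).
  apply: leq_add.
  - apply: sub_sum => x; first by move=> /andP [_ Hx]; exact: (subsetP HC1).
    move=> _; apply: sub_sum => // i /andP [-> H] /=; apply: contra H; exact: Hsp.
  - apply: sub_sum => x; first by move=> /andP [_ Hx]; exact: (subsetP HC2).
    move=> _; apply: sub_sum => // i /andP [-> H] /=; apply: contra H; exact: Hsp.
rewrite -big_split /=; apply: leq_sum => x _; rewrite /f1 /f2 /unsp.
apply: sum2_le => i.
- by case/andP => _ ->.
- by case/andP => _ ->.
- move=> /andP [H1 _] /andP [/andP [H2 H3] _]; exact: (Hdisj _ H3 H1 H2).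
Qed.


Lemma sub_sum0 (I : finType) (P Q : pred I) (f f' : I -> nat) :
  (forall x, P x -> ~~ Q x -> f x = 0) -> (forall x, P x -> Q x -> f x <= f' x) ->
  \sum_(x | P x) f x <= \sum_(x | Q x) f' x.
Proof.
move=> H0 Hf; rewrite big_mkcond [leqRHS]big_mkcond /=; apply: leq_sum => x _.
case HP: (P x); last by [].
case HQ: (Q x); first exact: Hf.
by rewrite H0 // HQ.
Qed.

Lemma ins_nntx x : ~~ is_ntx m x -> ins m x = [::].
Proof. by rewrite /is_ntx /ins; case: (m x). Qed.

Lemma part2 (A2 C2 L Ck : {set T}) t2 k :
  closedS m L -> cfree m L -> C2 \subset L -> L \subset pastS m A2 -> L \subset Defs.prefix time k ->
  Ck \subset L ->
  3 * (adv_genesis m g honest + adv_inc m time honest k) < M + 3 * adv_dec m honest Ck ->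
  3 * (\sum_(x in pastS m A2 | x \in C2) \sum_(i < size (outs m x) | (outdeleg m (x, val i) \in signers m A2 t2) && ~~ honest (outdeleg m (x, val i)) && ~~ spent_in m (pastS m A2) (x, val i)) outval m (x, val i)) < M.
Proof.
move=> Hcl Hcf HC2 HL2 HLk HCk Hadv.
have Hsp : forall (V : {set T}) o, L \subset V -> spent_in m L o -> spent_in m V o.
  move=> V o HLV /existsP [u /andP [Hu Ho]]; apply/existsP; exists u; by rewrite (subsetP HLV _ Hu) Ho.
set Pa := predC honest.
set U := \sum_(x in L) unsp m Pa L x.
have H1 : \sum_(x in pastS m A2 | x \in C2) \sum_(i < size (outs m x) | (outdeleg m (x, val i) \in signers m A2 t2) && ~~ honest (outdeleg m (x, val i)) && ~~ spent_in m (pastS m A2) (x, val i)) outval m (x, val i) <= U.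
  apply: sub_sum => x; first by move=> /andP [_ Hx]; exact: (subsetP HC2).
  move=> _; apply: sub_sum => // i /andP [/andP [_ Hh] H]; rewrite /Pa /= Hh /=; apply: contra H; exact: Hsp.
have Hf := flow WF Pa Hcl Hcf.
set J := fun x => Pa (txv m x) && (x != g).
have Htot : forall x, totP m Pa x = (if x == g then adv_genesis m g honest else 0) + (if J x then invP m honest x + invP m Pa x else 0).
  move=> x; rewrite /J; case: (eqVneq x g) => [->|Hne] /=.
  - by rewrite tot_seq andbF addn0.
  - by rewrite (tot_other WF) // andbT (invP_split m honest x).
rewrite (eq_bigr _ (fun x _ => Htot x)) big_split /= in Hf.
have Hg := sum_g L (adv_genesis m g honest).
have Hinc : \sum_(x in L) (if J x then invP m honest x + invP m Pa x else 0) =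
   \sum_(x in L | J x) invP m honest x + \sum_(x in L | J x) invP m Pa x.
  by rewrite -big_split /= [RHS]big_mkcondr.
have HinvP : \sum_(x in L) invP m Pa x = \sum_(x in L | J x) invP m Pa x + \sum_(x in L | ~~ J x) invP m Pa x.
  exact: bigID.
have Hi : \sum_(x in L | J x) invP m honest x <= adv_inc m time honest k.
  rewrite /adv_inc; apply: sub_sum0 => x /andP [HxL HJ].
  - move=> Hn; rewrite /invP ins_nntx ?big_nil //.
    apply: contra Hn => Hn; move: HJ; rewrite /J => /andP [Ha _].
    move: (subsetP HLk _ HxL); rewrite inE => ->; by rewrite Hn.
  - by move=> _.
have Hd : adv_dec m honest Ck <= \sum_(x in L | ~~ J x) invP m Pa x.
  rewrite /adv_dec; apply: sub_sum => x.
  - move=> /andP [HxC /andP [_ Hh]]; rewrite (subsetP HCk _ HxC) /J /Pa /= Hh //.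
  - by move=> _.
rewrite Hinc HinvP in Hf.
lia.
Qed.

End Parts.


Definition pb (P : Prop) : bool := if excluded_middle_informative P then true else false.
Lemma pbP (P : Prop) : reflect P (pb P).
Proof. by rewrite /pb; case: excluded_middle_informative => H; constructor. Qed.

Section Main.
Variables (T : finType) (m : T -> msg T) (g : T) (M : nat) (time : T -> nat) (honest : pred key).
Variable WF : well_formed m g M time.
Variable HC : honest_chain m time honest.
Variable HADV : adversary_bound m g M time honest.

Definition certN n D t A C := certP m M (confN m g M n) D t A C.
Definition tau (A : {set T}) := \max_(a in A) time a.
Definition el (n : nat) (A : {set T}) : nat * nat := (tau A, n).
Definition Cl n (A : {set T}) : {set T} := [set y in pastS m A | pb (confN m g M n (pastS m A) y)].
Definition G k : {set T} := [set w | pb (confirmed m g M (Defs.prefix time k) w)].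

Lemma tau_pastS (A : {set T}) y : y \in pastS m A -> time y <= tau A.
Proof.
move=> /pastSP [a Ha Hy]; apply: leq_trans (past_time WF Hy) _.
by rewrite /tau; apply: leq_bigmax_cond.
Qed.

Lemma tau_sub (A A' : {set T}) : A' \subset pastS m A -> tau A' <= tau A.
Proof. move=> H; apply/bigmax_leqP => a Ha; apply: tau_pastS; exact: (subsetP H). Qed.

Lemma pastS_sub (A A' : {set T}) : A' \subset pastS m A -> pastS m A' \subset pastS m A.
Proof.
move=> H; apply/subsetP => y /pastSP [a Ha Hy]; apply: pastS_down Hy; exact: (subsetP H).
Qed.

Lemma cert_time n D t A C : certN n D t A C -> exists2 a, a \in A & t \in past m a /\ time t < time a.
Proof.
case=> _ _ _ _ _ _ Hq _; case: (sig_nonempty Hq) => v /signersP [a [Ha _ Ht _]].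
exists a => //; split; [apply: refs_past | apply: (ref_time WF)]; exact: txs_refs.
Qed.

Lemma cert_tau n D t A C : certN n D t A C -> time t < tau A.
Proof.
move=> Hc; case: (cert_time Hc) => a Ha [_ Hlt]; apply: leq_trans Hlt _.
by rewrite /tau; apply: leq_bigmax_cond.
Qed.

Lemma cert_npos n D t A C : certN n D t A C -> 0 < n.
Proof.
case: n => // Hc; case: (sig_nonempty (cp_q Hc)) => v Hv.
have HC0 : C = set0.
  apply/setP => c; rewrite inE; apply/negP => Hcin; exact: (cp_C Hc Hcin).
move: (cp_q Hc); rewrite big1 ?muln0 // => w _; rewrite /stake big_pred0 // => x.
by rewrite HC0 inE andbF.
Qed.

Lemma ltE_of a a' n n' : a' <= a -> n' < n -> ltE (a', n') (a, n).
Proof. rewrite /ltE /=; lia. Qed.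

Lemma Cl_sub n A : Cl n A \subset pastS m A.
Proof. by apply/subsetP => y; rewrite inE => /andP []. Qed.

Lemma Cl_C n D t A C : certN n D t A C -> C \subset Cl n A.
Proof.
move=> Hc; apply/subsetP => c Hcin; have H := cp_C Hc Hcin.
by rewrite inE (confN_in H) /=; apply/pbP.
Qed.

Lemma Cl_conf n A y : y \in Cl n A -> confN m g M n (pastS m A) y.
Proof. by rewrite inE => /andP [_ /pbP]. Qed.

Lemma Cl_closed n A : closedS m (Cl n A).
Proof.
move=> y p /Cl_conf; case: n => // n /= [[-> _]|[A' [C' Hc]]].
  by rewrite (ins_g WF).
move=> Hp; have H := cp_ins Hc Hp.
have H' : confN m g M n.+1 (pastS m A) p.1 by apply: confN_mono H.
by rewrite inE (confN_in H') /=; apply/pbP.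
Qed.

Lemma Cl_cert n A y : y \in Cl n A -> y != g ->
  exists n' A' C', [/\ n = n'.+1, certN n' (pastS m A) y A' C', A' \subset pastS m A &
                     ltE (el n' A') (el n A)].
Proof.
move=> /Cl_conf; case: n => // n /= [[-> _]|[A' [C' Hc]]]; first by rewrite eqxx.
move=> _; exists n, A', C'; split => //; first exact: (cp_AD Hc).
apply: ltE_of => //; apply: tau_sub; exact: (cp_AD Hc).
Qed.

Lemma G_closed k : closedS m (G k).
Proof.
move=> y p; rewrite !inE => /pbP Hy Hp; apply/pbP; exact: (conf_inputs WF Hy Hp).
Qed.

Lemma G_prefix k : G k \subset Defs.prefix time k.
Proof. by apply/subsetP => w; rewrite inE => /pbP /conf_in. Qed.

Lemma G_cert k w : w \in G k -> w != g ->
  exists n A C, certN n (Defs.prefix time k) w A C /\ tau A < k.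
Proof.
rewrite inE => /pbP Hw Hne; case: (conf_confN Hw) => [[|n]] //= [[E _]|[A [C Hc]]].
  by rewrite E eqxx in Hne.
exists n, A, C; split => //.
have Hk : 0 < k by move: (conf_in Hw); rewrite inE => H; apply: leq_ltn_trans H.
rewrite -(prednK Hk) ltnS; apply/bigmax_leqP => a Ha.
move: (subsetP (cp_AD Hc) _ Ha); rewrite inE => H; rewrite -ltnS prednK //.
Qed.

Lemma is_ack_ntx x : is_ack m x -> is_ntx m x -> False.
Proof. by rewrite /is_ack /is_ntx; case: (m x). Qed.

Lemma shares_sym t u : shares m t u = shares m u t.
Proof.
by apply/hasP/hasP => [[o H1 H2]|[o H1 H2]]; exists o.
Qed.

Lemma noshare_cmp n D t A C n' D' t' A' C' p :
  certN n D t A C -> certN n' D' t' A' C' -> t != t' -> p \in ins m t -> p \in ins m t' ->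
  t \in pastS m A' \/ t' \in pastS m A -> False.
Proof.
move=> Hc Hc' Hne Hp Hp' [H|H].
- have := cp_ns Hc' H Hne; by move/negP; apply; apply/hasP; exists p.
- have Hne' : t' != t by rewrite eq_sym.
  have := cp_ns Hc H Hne'; by move/negP; apply; apply/hasP; exists p.
Qed.


Lemma disj n1 D1 t1 A1 C1 n2 D2 t2 A2 C2 :
  certN n1 D1 t1 A1 C1 -> certN n2 D2 t2 A2 C2 ->
  t1 \notin pastS m A2 -> t2 \notin pastS m A1 ->
  forall v, honest v -> v \in signers m A1 t1 -> v \in signers m A2 t2 -> False.
Proof.
move=> P1 P2 H1 H2 v Hv /signersP [a [Ha Haa Ht1 Hav]] /signersP [b [Hb Hba Ht2 Hbv]].
have Ht1a : t1 \in past m a by apply: refs_past; exact: txs_refs.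
have Ht2b : t2 \in past m b by apply: refs_past; exact: txs_refs.
case: (ltngtP (time a) (time b)) => Hab.
- have Hpa := chain WF HC Hv Haa Hba Hav Hbv Hab.
  move/negP: H1; apply; apply/pastSP; exists b => //; exact: past_trans Hpa Ht1a.
- have Hpb := chain WF HC Hv Hba Haa Hbv Hav Hab.
  move/negP: H2; apply; apply/pastSP; exists a => //; exact: past_trans Hpb Ht2b.
- have E := time_inj WF Hab; subst b.
  move/negP: H1; apply; apply/pastSP; by exists a.
Qed.

Definition IHtype (K0 : (nat * nat) * (nat * nat)) := forall n1 D1 t1 A1 C1 n2 D2 t2 A2 C2,
  certN n1 D1 t1 A1 C1 -> certN n2 D2 t2 A2 C2 -> ltK (keyE (el n1 A1) (el n2 A2)) K0 ->
  t1 \in pastS m A2 \/ t2 \in pastS m A1.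

Lemma cfree_small (L : {set T}) e1 e2 : IHtype (keyE e1 e2) ->
  (forall y, y \in L -> y != g -> exists n D A C, certN n D y A C /\ (ltE (el n A) e1 \/ ltE (el n A) e2)) ->
  cfree m L.
Proof.
move=> IH Hs y y' p Hy Hy' Hp Hp'.
case: (eqVneq y y') => // Hne; exfalso.
have Hyg : y != g by apply: contraTneq Hp => ->; rewrite (ins_g WF).
have Hyg' : y' != g by apply: contraTneq Hp' => ->; rewrite (ins_g WF).
case: (Hs _ Hy Hyg) => n [D [A [C [Hc He]]]].
case: (Hs _ Hy' Hyg') => n' [D' [A' [C' [Hc' He']]]].
apply: (noshare_cmp Hc Hc' Hne Hp Hp'); apply: (IH _ _ _ _ _ _ _ _ _ _ Hc Hc'); exact: K4.
Qed.

Lemma closedU (L1 L2 : {set T}) : closedS m L1 -> closedS m L2 -> closedS m (L1 :|: L2).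
Proof.
move=> H1 H2 y p /setUP [Hy|Hy] Hp; apply/setUP; [left; exact: H1 Hy Hp | right; exact: H2 Hy Hp].
Qed.


Lemma arith (M0 s1 h a : nat) : 2 * M0 < 3 * s1 -> 2 * M0 < 3 * (h + a) -> s1 + h <= M0 -> 3 * a < M0 -> False.
Proof. lia. Qed.

Lemma core n1 D1 t1 A1 C1 n2 D2 t2 A2 C2 :
  IHtype (keyE (el n1 A1) (el n2 A2)) ->
  certN n1 D1 t1 A1 C1 -> certN n2 D2 t2 A2 C2 ->
  t1 \notin pastS m A2 -> t2 \notin pastS m A1 -> False.
Proof.
move=> IH P1 P2 H1 H2.
have Hdisj := disj P1 P2 H1 H2.
case: (cert_time P1) => a1 Ha1 _; case: (cert_time P2) => a2 Ha2 _.
have Hg1 : g \in pastS m A1 := g_pastS WF Ha1.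
have Hg2 : g \in pastS m A2 := g_pastS WF Ha2.
have HCl2 : Cl n2 A2 \subset pastS m A1.
  apply/subsetP => y Hy; case: (eqVneq y g) => [->//|Hyg].
  case: (Cl_cert Hy Hyg) => n' [A' [C' [En Hc HA' Hlt]]].
  case: (IH _ _ _ _ _ _ _ _ _ _ P1 Hc (K2 _ Hlt)) => // Ht1.
  case/negP: H1; exact: (subsetP (pastS_sub HA') _ Ht1).
have HCl1 : Cl n1 A1 \subset pastS m A2.
  apply/subsetP => y Hy; case: (eqVneq y g) => [->//|Hyg].
  case: (Cl_cert Hy Hyg) => n' [A' [C' [En Hc HA' Hlt]]].
  case: (IH _ _ _ _ _ _ _ _ _ _ Hc P2 (K2' _ Hlt)) => // Ht2.
  case/negP: H2; exact: (subsetP (pastS_sub HA') _ Ht2).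
pose L := Cl n1 A1 :|: Cl n2 A2.
have HLcl : closedS m L := closedU (@Cl_closed n1 A1) (@Cl_closed n2 A2).
have HLcf : cfree m L.
  apply: (cfree_small IH) => y /setUP [Hy|Hy] Hyg.
  - case: (Cl_cert Hy Hyg) => n' [A' [C' [_ Hc _ Hlt]]]; exists n', (pastS m A1), A', C'; by split; [|left].
  - case: (Cl_cert Hy Hyg) => n' [A' [C' [_ Hc _ Hlt]]]; exists n', (pastS m A2), A', C'; by split; [|right].
have HC1L : C1 \subset L by apply: subset_trans (Cl_C P1) _; exact: subsetUl.
have HC2L : C2 \subset L by apply: subset_trans (Cl_C P2) _; exact: subsetUr.
have HL1 : L \subset pastS m A1 by rewrite subUset Cl_sub HCl2.
have HL2 : L \subset pastS m A2 by rewrite subUset Cl_sub HCl1.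
have HP1 := part1 WF HLcl HLcf HC1L HC2L HL1 HL2 Hdisj.
have Hn2 := cert_npos P2.
have Hg2Cl : g \in Cl n2 A2.
  rewrite inE Hg2 /=; apply/pbP; rewrite -(prednK Hn2) /=; by left.
pose x := [arg max_(y > g in Cl n2 A2) time y].
have [Hx Hxmax] : x \in Cl n2 A2 /\ forall y, y \in Cl n2 A2 -> time y <= time x.
  rewrite /x; case: arg_maxnP => // y Hy Hmax; split => // z Hz; exact: Hmax.
pose k := (time x).+1.
have HG : G k \subset pastS m A2 /\ (forall w, w \in G k -> w != g ->
   exists n D A C, certN n D w A C /\ (ltE (el n A) (el n1 A1) \/ ltE (el n A) (el n2 A2))).
  case: (eqVneq x g) => [Exg|Hxg].
  - have Hw : forall w, w \in G k -> w = g.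
      move=> w Hw; case: (eqVneq w g) => // Hwg; exfalso.
      move: (subsetP (G_prefix k) _ Hw); rewrite inE /k Exg ltnS => Hle.
      have Hgw : g != w by rewrite eq_sym.
      have Hlt := past_time_lt WF (g_past WF w) Hgw.
      by move: Hlt; rewrite ltnNge Hle.
    split; first by apply/subsetP => w /Hw ->.
    by move=> w /Hw ->; rewrite eqxx.
  - case: (Cl_cert Hx Hxg) => n' [Ax [Cx [En Pcx HAx Hltx]]].
    have Htx := cert_tau Pcx.
    have Htau := tau_sub HAx.
    have Hsm : forall w, w \in G k -> w != g ->
        exists nw Aw Cw, certN nw (Defs.prefix time k) w Aw Cw /\ ltE (el nw Aw) (el n2 A2) /\ tau Aw < k.
      move=> w Hw Hwg; case: (G_cert Hw Hwg) => nw [Aw [Cw [Pw Hk]]].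
      exists nw, Aw, Cw; split => //; split => //; rewrite /ltE /el /=; left.
      rewrite /k ltnS in Hk; exact: leq_ltn_trans Hk (leq_trans Htx Htau).
    split.
    + apply/subsetP => w Hw; case: (eqVneq w g) => [->//|Hwg].
      case: (Hsm _ Hw Hwg) => nw [Aw [Cw [Pw [Hlw Hk]]]].
      case: (IH _ _ _ _ _ _ _ _ _ _ Pw Pcx (K1 _ Hlw Hltx)) => Hc.
      * exact: (subsetP (pastS_sub HAx) _ Hc).
      * exfalso; case/pastSP: Hc => b Hb Hxb.
        have Hxb' : x != b.
          apply/negP => /eqP E; subst b; exact: (is_ack_ntx (cp_ack Pw Hb) (cp_ntx Pcx)).
        have H3 := past_time_lt WF Hxb Hxb'.
        have H4 : time b <= tau Aw by rewrite /tau; apply: leq_bigmax_cond.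
        rewrite /k ltnS in Hk.
        by move: (leq_trans (leq_trans H3 H4) Hk); rewrite ltnn.
    + move=> w Hw Hwg; case: (Hsm _ Hw Hwg) => nw [Aw [Cw [Pw [Hlw _]]]].
      by exists nw, (Defs.prefix time k), Aw, Cw; split; [|right].
case: HG => HG2 HGs.
pose L' := Cl n2 A2 :|: G k.
have HL'cl : closedS m L' := closedU (@Cl_closed n2 A2) (@G_closed k).
have HL'cf : cfree m L'.
  apply: (cfree_small IH) => y /setUP [Hy|Hy] Hyg; last exact: HGs.
  case: (Cl_cert Hy Hyg) => n' [A' [C' [_ Hc _ Hlt]]]; exists n', (pastS m A2), A', C'; by split; [|right].
have HC2L' : C2 \subset L' by apply: subset_trans (Cl_C P2) _; exact: subsetUl.
have HL'2 : L' \subset pastS m A2 by rewrite subUset Cl_sub HG2.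
have HL'k : L' \subset Defs.prefix time k.
  rewrite subUset G_prefix andbT; apply/subsetP => y Hy; rewrite inE /k ltnS; exact: Hxmax.
case: (HADV k) => Ck [HCk Hb].
have HCkL : Ck \subset L'.
  apply/subsetP => t Ht; apply/setUP; right; rewrite inE; apply/pbP; exact: HCk.
have HP2 := part2 WF t2 HL'cl HL'cf HC2L' HL'2 HL'k HCkL Hb.
have Hq1 := cp_q P1.
have Hq2 := cp_q P2.
rewrite sig_sum in Hq2.
have Hsplit : \sum_(x in pastS m A2 | x \in C2) \sum_(i < size (outs m x) | (outdeleg m (x, val i) \in signers m A2 t2) && ~~ spent_in m (pastS m A2) (x, val i)) outval m (x, val i) =
  \sum_(x in pastS m A2 | x \in C2) \sum_(i < size (outs m x) | (outdeleg m (x, val i) \in signers m A2 t2) && honest (outdeleg m (x, val i)) && ~~ spent_in m (pastS m A2) (x, val i)) outval m (x, val i) +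
  \sum_(x in pastS m A2 | x \in C2) \sum_(i < size (outs m x) | (outdeleg m (x, val i) \in signers m A2 t2) && ~~ honest (outdeleg m (x, val i)) && ~~ spent_in m (pastS m A2) (x, val i)) outval m (x, val i).
  rewrite -big_split /=; apply: eq_bigr => y _.
  rewrite (bigID (fun i : 'I__ => honest (outdeleg m (y, val i)))) /=.
  by congr (_ + _); apply: eq_bigl => i; rewrite andbAC.
rewrite Hsplit in Hq2.
exact: arith Hq1 Hq2 HP1 HP2.
Qed.

Theorem ML k : forall n1 D1 t1 A1 C1 n2 D2 t2 A2 C2,
  certN n1 D1 t1 A1 C1 -> certN n2 D2 t2 A2 C2 -> keyE (el n1 A1) (el n2 A2) = k ->
  t1 \in pastS m A2 \/ t2 \in pastS m A1.
Proof.
elim/(well_founded_ind wf_ltK): k => k IH n1 D1 t1 A1 C1 n2 D2 t2 A2 C2 P1 P2 Hk.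
case: (boolP (t1 \in pastS m A2)) => [H|H1]; first by left.
case: (boolP (t2 \in pastS m A1)) => [H|H2]; first by right.
exfalso; apply: (core _ P1 P2 H1 H2).
move=> n1' D1' t1' A1' C1' n2' D2' t2' A2' C2' P1' P2' Hlt.
apply: (IH _ _ _ _ _ _ _ _ _ _ _ _ P1' P2' erefl); by rewrite -Hk.
Qed.

End Main.


Lemma dep_conf (T : finType) (m : T -> msg T) (g : T) (M : nat) (time : T -> nat)
  (WF : well_formed m g M time) D u t :
  depends m u t -> confirmed m g M D u -> confirmed m g M D t.
Proof.
rewrite /depends => /connectP [p Hp ->]; elim: p u Hp => [|x p IH] u //= /andP [Hux Hp] Hu.
apply: IH Hp _; move: Hux => /hasP [o Ho /eqP <-]; exact: (conf_inputs WF Hu Ho).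
Qed.

Theorem theorem5 (T : finType) (m : T -> msg T) (g : T) (M : nat)
    (time : T -> nat) (honest : pred key) :
  well_formed m g M time ->
  honest_chain m time honest ->
  honest_signing m honest ->
  honest_spending m honest ->
  adversary_bound m g M time honest ->
  forall t1 t2 : T,
    confirmed m g M [set: T] t1 -> confirmed m g M [set: T] t2 ->
    ~ conflict m t1 t2.
Proof.
move=> WF HC _ _ HADV t1 t2 Hc1 Hc2 Hcf.
elim: Hcf Hc1 Hc2 => [a b Ha Hb Hne Hsh | a b u1 u2 Hab IHab Hd1 Hd2] Hc1 Hc2; last first.
  exact: IHab (dep_conf WF Hd1 Hc1) (dep_conf WF Hd2 Hc2).
case/hasP: Hsh => p Hpa Hpb.
have Hcert : forall c, confirmed m g M [set: T] c -> p \in ins m c ->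
    exists n A C, certN m g M n [set: T] c A C.
  move=> c Hc Hp; case: (conf_confN Hc) => [[|n]] //= [[E _]|[A [C Hcc]]].
    by move: Hp; rewrite E (ins_g WF).
  by exists n, A, C.
case: (Hcert _ Hc1 Hpa) => n1 [A1 [C1 P1]].
case: (Hcert _ Hc2 Hpb) => n2 [A2 [C2 P2]].
exact: (noshare_cmp P1 P2 Hne Hpa Hpb (ML WF HC HADV P1 P2 erefl)).
Qed.
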